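(* Let $n$ be an odd prime and let $x,y,z$ be positive integers with $\gcd(x,y,z)=1$ satisfying $x^n + y^n = z^n$. Then: (i) every odd prime $p \mid x$ satisfies $\nu_p(z^{p-1} - y^{p-1}) \geq n - 1$; every odd prime $p \mid y$ satisfies $\nu_p(z^{p-1} - x^{p-1}) \geq n - 1$; every odd prime $p \mid z$ satisfies $\nu_p(x^{p-1} - y^{p-1}) \geq n - 1$; (ii) if moreover $n \nmid xyz$, then the lower bounds $n-1$ in (i) can be replaced by $n$; (iii) if $2 \mid z$ then $\nu_2(x + y) \geq n$; if $2 \mid x$ then $\nu_2(z - y) \geq n$; if $2 \mid y$ then $\nu_2(z - x) \geq n$; (iv) if a prime $p$ divides both $x$ and $z - y$, then $\nu_p(z - y) \geq n - 1$; if a prime $p$ divides both $y$ and $z - x$, then $\nu_p(z - x) \geq n - 1$; if a prime $p$ divides both $z$ and $x + y$, then $\nu_p(x + y) \geq n - 1$.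
   Context: For a prime $p$ and a nonzero integer $m$, $\nu_p(m)$ denotes the exponent of the exact power of $p$ dividing $m$ (the $p$-adic valuation). (The paper phrases (i) as: $p$ is a ''Wieferich prime to the base $(a,b)$ of order $r$'' when $p\nmid ab$ and $\nu_p(a^{p-1}-b^{p-1}) = r > 1$.) *)

(* Defs.v *)
From mathcomp Require Import all_boot all_order all_algebra.
Set Implicit Arguments. Unset Strict Implicit. Unset Printing Implicit Defensive.
Import Order.TTheory GRing.Theory Num.Theory.

(* p-adic valuation of an integer m: exponent of p in |m|.
   (Only ever applied where m is nonzero in the intended use; for m = 0
   mathcomp's logn gives 0.) *)
Definition nu (p : nat) (m : int) : nat := logn p `|m|%N.

(* Main.v *)
Require Import Defs.
From mathcomp Require Import all_boot all_order all_algebra all_solvable.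
From mathcomp Require Import ring zify.
Import Order.TTheory GRing.Theory Num.Theory.
Local Open Scope ring_scope.

Fixpoint Ssum (A B : int) (k : nat) : int :=
  match k with 0%N => 0 | k'.+1 => A * Ssum A B k' + B ^+ k' end.

Lemma SsumE A B k : A ^+ k - B ^+ k = (A - B) * Ssum A B k.
Proof.
elim: k => [|k IH] /=; first by rewrite !expr0 subrr mulr0.
rewrite !exprS.
have -> : A ^+ k = (A - B) * Ssum A B k + B ^+ k by rewrite -IH; ring.
ring.
Qed.

Lemma Sexp A B k : exists c, Ssum A B k.+2 =
  (k.+2)%:R * B ^+ k.+1 + (A - B) * ('C(k.+2, 2))%:R * B ^+ k + (A - B) ^+ 2 * c.
Proof.
elim: k => [|k [c IH]].
  by exists 0; rewrite /= !expr0 !expr1 binn; ring.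
exists ('C(k.+2, 2)%:R * B ^+ k + A * c).
rewrite -[Ssum A B k.+3]/(A * Ssum A B k.+2 + B ^+ k.+2) IH.
have -> : 'C(k.+3, 2) = ('C(k.+2, 2) + k.+2)%N by rewrite binS bin1.
rewrite natrD !exprS; ring.
Qed.

Lemma dvdz_prime_mul (p : nat) (a b : int) : prime p ->
  (p%:Z %| a * b)%Z -> (p%:Z %| a)%Z || (p%:Z %| b)%Z.
Proof. by move=> pp; rewrite !dvdzE abszM Euclid_dvdM. Qed.

Lemma dvdz_prime_exp (p : nat) (a : int) k : prime p ->
  (p%:Z %| a ^+ k)%Z -> (p%:Z %| a)%Z.
Proof. by move=> pp; rewrite !dvdzE abszX Euclid_dvdX // => /andP[]. Qed.

Lemma S_ndvd (p n : nat) A B : prime p -> prime n -> odd n ->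
  (p%:Z %| A - B)%Z -> ~~ (p%:Z %| B)%Z ->
  ~~ (p%:Z ^+ (1 + (p == n)) %| Ssum A B n)%Z.
Proof.
move=> pp pn on ht hB.
have n3 : (2 < n)%N.
  have := prime_gt1 pn; case: n pn on {ht} => [|[|[|m]]] //.
case: n n3 pn on => [|[|k]] // _ pn on.
have [c ->] := Sexp A B k.
have hC : (p%:Z %| (A - B) * ('C(k.+2, 2))%:R * B ^+ k)%Z.
  by apply: dvdz_mulr; apply: dvdz_mulr.
have h2 : (p%:Z %| (A - B) ^+ 2 * c)%Z.
  by apply: dvdz_mulr; apply: dvdz_exp.
case: eqP => [pe|pne]; rewrite /= ?addn0.
- subst p.
  have hC2 : (k.+2%:Z ^+ 2 %| (A - B) * ('C(k.+2, 2))%:R * B ^+ k)%Z.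
    rewrite expr2; apply: dvdz_mulr; apply: dvdz_mul => //.
    by rewrite natz dvdzE /=; apply: prime_dvd_bin => //; case: (k) on.
  have h22 : (k.+2%:Z ^+ 2 %| (A - B) ^+ 2 * c)%Z.
    by apply: dvdz_mulr; apply: dvdz_exp2r.
  rewrite [(1 + 1)%N]/= (rpredDr _ h22) (rpredDr _ hC2) expr2 natz dvdz_mul2l //.
  by apply/negP => /dvdz_prime_exp => /(_ pn); apply/negP.
- rewrite expr1 (rpredDr _ h2) (rpredDr _ hC) natz.
  apply/negP => /(@dvdz_prime_mul _ _ _ pp) /orP[|/dvdz_prime_exp]; last by move=> /(_ pp); apply/negP.
  by rewrite dvdzE /= dvdn_prime2 // => /eqP.
Qed.

Lemma PX (m k : nat) : (m%:Z) ^+ k = (m ^ k)%:Z.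
Proof. by elim: k => [|k IH]; rewrite ?expr0 // exprS expnS PoszM IH. Qed.

Lemma G (p n : nat) (A B : int) k : prime p -> prime n -> odd n ->
  (p%:Z %| A - B)%Z -> ~~ (p%:Z %| B)%Z -> A ^+ n - B ^+ n != 0 ->
  (p%:Z ^+ k %| A ^+ n - B ^+ n)%Z -> (k <= nu p (A - B) + (p == n))%N.
Proof.
move=> pp pn on ht hB; rewrite SsumE => nz.
have [t0 s0] : (A - B != 0) /\ (Ssum A B n != 0).
  by move: nz; rewrite mulf_eq0 negb_or => /andP[].
rewrite dvdzE abszX abszM absz_nat (pfactor_dvdn _ pp) ?muln_gt0 ?absz_gt0 ?t0 ?s0 //.
rewrite lognM ?absz_gt0 // => hk.
rewrite /nu; apply: (leq_trans hk); rewrite leq_add2l.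
rewrite leqNgt; apply/negP => h.
have := @S_ndvd p n A B pp pn on ht hB; apply/negP/negPn.
by rewrite dvdzE abszX absz_nat (pfactor_dvdn _ pp) ?absz_gt0 // add1n.
Qed.

Lemma Liv (n p : nat) (A B : int) (c : nat) : prime p -> prime n -> odd n ->
  (0 < c)%N -> A ^+ n - B ^+ n = (c ^ n)%:Z -> (p %| c)%N ->
  (p%:Z %| A - B)%Z -> ~~ (p%:Z %| B)%Z -> (n <= nu p (A - B) + (p == n))%N.
Proof.
move=> pp pn on c0 E pc ht hB; apply: G => //; rewrite E.
  by rewrite -absz_gt0 absz_nat expn_gt0 c0.
by rewrite dvdzE abszX !absz_nat dvdn_exp2r.
Qed.

Lemma Li (n p a b c : nat) (Y : int) : prime p -> odd p -> prime n -> odd n ->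
  (0 < c)%N -> Y ^+ (p - 1) = ((b ^ n)%:Z) ^+ (p - 1) ->
  (a ^ n)%:Z - Y = (c ^ n)%:Z -> (p %| c)%N -> ~~ (p %| b)%N -> ~~ (p %| a)%N ->
  a != b -> (n <= nu p ((a ^ (p - 1))%:Z - (b ^ (p - 1))%:Z) + (p == n))%N.
Proof.
move=> pp op pn on c0 EY E pc pb pa ab.
have Fe m : ~~ (p %| m)%N -> (m ^ (p - 1) = 1 %[mod p])%N.
  move=> pm; rewrite subn1 -totient_prime // Euler_exp_totient //.
  by rewrite coprime_sym prime_coprime.
apply: G => //.
- by rewrite -eqz_mod_dvd !modz_nat Fe // Fe.
- by rewrite dvdzE absz_nat Euclid_dvdX // negb_and pb.
- rewrite !PX subr_eq0 eqz_nat -!expnM eqn_exp2r //.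
  by rewrite muln_gt0 subn_gt0 prime_gt1 // prime_gt0.
have eA m : ((m ^ (p - 1))%:Z) ^+ n = ((m ^ n)%:Z) ^+ (p - 1).
  by rewrite !PX -!expnM mulnC.
rewrite !eA -EY SsumE E; apply: dvdz_mulr.
by rewrite dvdzE abszX !absz_nat dvdn_exp2r.
Qed.

Lemma cop_of (a b c n : nat) : (0 < a)%N ->
  (forall q, prime q -> (q %| a)%N -> (q %| b)%N -> (q %| c)%N) ->
  gcdn (gcdn a b) c = 1%N -> coprime a b.
Proof.
move=> a0 H g1; rewrite /coprime; apply/negPn/negP => gn1.
have g0 : (0 < gcdn a b)%N by rewrite gcdn_gt0 a0.
have g2 : (1 < gcdn a b)%N by rewrite ltn_neqAle eq_sym gn1.
have qp := pdiv_prime g2.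
have qg := pdiv_dvd (gcdn a b).
have qa : (pdiv (gcdn a b) %| a)%N := dvdn_trans qg (dvdn_gcdl _ _).
have qb : (pdiv (gcdn a b) %| b)%N := dvdn_trans qg (dvdn_gcdr _ _).
have : (pdiv (gcdn a b) %| gcdn (gcdn a b) c)%N by rewrite dvdn_gcd qg H.
by rewrite g1 dvdn1 => /eqP q1; rewrite q1 in qp.
Qed.

Lemma cop_ndvd {p a b : nat} : prime p -> coprime a b -> (p %| a)%N -> ~~ (p %| b)%N.
Proof.
move=> pp cab pa; apply/negP => pb.
have : (p %| gcdn a b)%N by rewrite dvdn_gcd pa pb.
by rewrite (eqP cab) dvdn1 => /eqP p1; rewrite p1 in pp.
Qed.

Theorem theorem1p4 (n x y z : nat) :
  prime n -> odd n ->
  (0 < x)%N -> (0 < y)%N -> (0 < z)%N ->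
  gcdn (gcdn x y) z = 1%N ->
  (x ^ n + y ^ n = z ^ n)%N ->
  (* (i) *)
  [/\ (forall p : nat, prime p -> odd p -> (p %| x)%N ->
         (n - 1 <= nu p ((z ^ (p - 1))%:Z - (y ^ (p - 1))%:Z))%N),
      (forall p : nat, prime p -> odd p -> (p %| y)%N ->
         (n - 1 <= nu p ((z ^ (p - 1))%:Z - (x ^ (p - 1))%:Z))%N) &
      (forall p : nat, prime p -> odd p -> (p %| z)%N ->
         (n - 1 <= nu p ((x ^ (p - 1))%:Z - (y ^ (p - 1))%:Z))%N)]
  /\
  (* (ii) *)
  (~~ (n %| x * y * z)%N ->
    [/\ (forall p : nat, prime p -> odd p -> (p %| x)%N ->
           (n <= nu p ((z ^ (p - 1))%:Z - (y ^ (p - 1))%:Z))%N),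
        (forall p : nat, prime p -> odd p -> (p %| y)%N ->
           (n <= nu p ((z ^ (p - 1))%:Z - (x ^ (p - 1))%:Z))%N) &
        (forall p : nat, prime p -> odd p -> (p %| z)%N ->
           (n <= nu p ((x ^ (p - 1))%:Z - (y ^ (p - 1))%:Z))%N)])
  /\
  (* (iii) *)
  [/\ ((2 %| z)%N -> (n <= nu 2 (x%:Z + y%:Z))%N),
      ((2 %| x)%N -> (n <= nu 2 (z%:Z - y%:Z))%N) &
      ((2 %| y)%N -> (n <= nu 2 (z%:Z - x%:Z))%N)]
  /\
  (* (iv) *)
  [/\ (forall p : nat, prime p -> (p %| x)%N -> (p%:Z %| z%:Z - y%:Z)%Z ->
         (n - 1 <= nu p (z%:Z - y%:Z))%N),
      (forall p : nat, prime p -> (p %| y)%N -> (p%:Z %| z%:Z - x%:Z)%Z ->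
         (n - 1 <= nu p (z%:Z - x%:Z))%N) &
      (forall p : nat, prime p -> (p %| z)%N -> (p%:Z %| x%:Z + y%:Z)%Z ->
         (n - 1 <= nu p (x%:Z + y%:Z))%N)].
Proof.
move=> pn on x0 y0 z0 g1 E.
have n0 : (0 < n)%N := prime_gt0 pn.
have Ex : (x ^ n = z ^ n - y ^ n)%N by rewrite -E addnK.
have Ey : (y ^ n = z ^ n - x ^ n)%N by rewrite -E addKn.
have divz q : prime q -> (q %| x)%N -> (q %| y)%N -> (q %| z)%N.
  move=> qp qx qy; have : (q %| z ^ n)%N by rewrite -E dvdn_add // dvdn_exp.
  by rewrite Euclid_dvdX // => /andP[].
have divx q : prime q -> (q %| y)%N -> (q %| z)%N -> (q %| x)%N.
  move=> qp qy qz; have : (q %| x ^ n)%N by rewrite Ex dvdn_sub // dvdn_exp.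
  by rewrite Euclid_dvdX // => /andP[].
have divy q : prime q -> (q %| x)%N -> (q %| z)%N -> (q %| y)%N.
  move=> qp qx qz; have : (q %| y ^ n)%N by rewrite Ey dvdn_sub // dvdn_exp.
  by rewrite Euclid_dvdX // => /andP[].
have cxy : coprime x y by apply: (@cop_of x y z n x0).
have cyz : coprime y z.
  apply: (@cop_of y z x n y0) => [q qp qy qz|]; first exact: divx.
  by rewrite gcdnC gcdnA.
have cxz : coprime x z.
  apply: (@cop_of x z y n x0) => [q qp qx qz|]; first exact: divy.
  by rewrite gcdnAC.
have cyx : coprime y x by rewrite coprime_sym.
have czy : coprime z y by rewrite coprime_sym.
have czx : coprime z x by rewrite coprime_sym.
have yz : (y < z)%N.
  by rewrite -(ltn_exp2r _ _ n0) -E -{1}[(y ^ n)%N]add0n ltn_add2r expn_gt0 x0.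
have xz : (x < z)%N.
  by rewrite -(ltn_exp2r _ _ n0) -E -{1}[(x ^ n)%N]addn0 ltn_add2l expn_gt0 y0.
have ezy : (z ^ n)%:Z - (y ^ n)%:Z = (x ^ n)%:Z by rewrite -E PoszD addrK.
have ezx : (z ^ n)%:Z - (x ^ n)%:Z = (y ^ n)%:Z by rewrite -E PoszD addrAC subrr add0r.
have exy : (x ^ n)%:Z - - (y ^ n)%:Z = (z ^ n)%:Z by rewrite opprK -PoszD E.
have sgn : (-1) ^+ n = -1 :> int by rewrite -signr_odd on.
have Nyn : (- y%:Z) ^+ n = - (y ^ n)%:Z by rewrite exprNn sgn mulN1r PX.
have sub1 (b : bool) m : (n <= m + b)%N -> (n - 1 <= m)%N.
  by case: b => /= h; lia.

have evp p : odd p -> (- (y ^ n)%:Z) ^+ (p - 1) = ((y ^ n)%:Z) ^+ (p - 1).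
  move=> op; rewrite exprNn -signr_odd.
  by case: (p) op => // p'; rewrite subn1 /= => /negbTE ->; rewrite expr0 mul1r.
have xy p : prime p -> odd p -> (p %| z)%N -> x != y.
  move=> pp op pz; apply/eqP => exy'; subst y.
  have : (p %| 2 * x ^ n)%N by rewrite mul2n -addnn E dvdn_exp.
  rewrite Euclid_dvdM // Euclid_dvdX // n0 andbT => /orP[|px].
    by rewrite dvdn_prime2 // => /eqP p2; rewrite p2 in op.
  by have := cop_ndvd pp cxz px; rewrite pz.
have I1 p : prime p -> odd p -> (p %| x)%N ->
    (n <= nu p ((z ^ (p - 1))%:Z - (y ^ (p - 1))%:Z) + (p == n))%N.
  move=> pp op px; apply: (@Li n p z y x ((y ^ n)%:Z)) => //.
  - exact: cop_ndvd pp cxy px.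
  - exact: cop_ndvd pp cxz px.
  - by rewrite neq_ltn yz orbT.
have I2 p : prime p -> odd p -> (p %| y)%N ->
    (n <= nu p ((z ^ (p - 1))%:Z - (x ^ (p - 1))%:Z) + (p == n))%N.
  move=> pp op py; apply: (@Li n p z x y ((x ^ n)%:Z)) => //.
  - exact: cop_ndvd pp cyx py.
  - exact: cop_ndvd pp cyz py.
  - by rewrite neq_ltn xz orbT.
have I3 p : prime p -> odd p -> (p %| z)%N ->
    (n <= nu p ((x ^ (p - 1))%:Z - (y ^ (p - 1))%:Z) + (p == n))%N.
  move=> pp op pz; apply: (@Li n p x y z (- (y ^ n)%:Z)) => //.
  - exact: evp.
  - exact: cop_ndvd pp czy pz.
  - exact: cop_ndvd pp czx pz.
  - exact: xy pp op pz.
have pnn p : ~~ (n %| x * y * z)%N -> (p %| x * y * z)%N -> (p == n) = false.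
  by move=> h1 h2; apply/eqP => pe; move: h1; rewrite -pe h2.
have n2 : (2 == n) = false by apply/eqP => h; rewrite -h in on.
split; [|split; [|split]].
- split=> p pp op pd; apply: sub1; [exact: I1|exact: I2|exact: I3].
- move=> h; split=> p pp op pd.
  + have := I1 p pp op pd; rewrite (pnn p h) ?addn0 //.
    by rewrite -mulnA dvdn_mulr.
  + have := I2 p pp op pd; rewrite (pnn p h) ?addn0 //.
    by rewrite mulnAC dvdn_mull.
  + have := I3 p pp op pd; rewrite (pnn p h) ?addn0 //.
    by rewrite dvdn_mull.
- have p2 : prime 2 by [].
  split=> h2.
  + have ox : odd x by rewrite -[odd _]negbK -dvdn2; exact: (cop_ndvd p2 czx h2).
    have oy : odd y by rewrite -[odd _]negbK -dvdn2; exact: (cop_ndvd p2 czy h2).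
    have := @Liv n 2 x%:Z (- y%:Z) z isT pn on z0.
    rewrite opprK n2 addn0; apply => //.
    + by rewrite Nyn PX -exy.
    + by rewrite -PoszD dvdzE absz_nat dvdn2 oddD ox oy.
    + by rewrite dvdzE abszN absz_nat dvdn2 negbK.
  + have oz : odd z by rewrite -[odd _]negbK -dvdn2; exact: (cop_ndvd p2 cxz h2).
    have oy : odd y by rewrite -[odd _]negbK -dvdn2; exact: (cop_ndvd p2 cxy h2).
    have := @Liv n 2 z%:Z y%:Z x isT pn on x0.
    rewrite n2 addn0; apply => //.
    + by rewrite !PX.
    + have -> : z%:Z - y%:Z = (z + y)%:Z - (2 * y)%:Z by rewrite PoszD PoszM; ring.
      by apply: rpredB; rewrite dvdzE absz_nat ?dvdn_mulr // dvdn2 oddD oz oy.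
    + by rewrite dvdzE absz_nat dvdn2 negbK.
  + have oz : odd z by rewrite -[odd _]negbK -dvdn2; exact: (cop_ndvd p2 cyz h2).
    have ox : odd x by rewrite -[odd _]negbK -dvdn2; exact: (cop_ndvd p2 cyx h2).
    have := @Liv n 2 z%:Z x%:Z y isT pn on y0.
    rewrite n2 addn0; apply => //.
    + by rewrite !PX.
    + have -> : z%:Z - x%:Z = (z + x)%:Z - (2 * x)%:Z by rewrite PoszD PoszM; ring.
      by apply: rpredB; rewrite dvdzE absz_nat ?dvdn_mulr // dvdn2 oddD oz ox.
    + by rewrite dvdzE absz_nat dvdn2 negbK.
- split=> p pp pd hd; apply: sub1.
  + apply: (@Liv n p z%:Z y%:Z x) => //; first by rewrite !PX.
    by rewrite dvdzE absz_nat; exact: cop_ndvd pp cxy pd.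
  + apply: (@Liv n p z%:Z x%:Z y) => //; first by rewrite !PX.
    by rewrite dvdzE absz_nat; exact: cop_ndvd pp cyx pd.
  + rewrite -[y%:Z]opprK.
    apply: (@Liv n p x%:Z (- y%:Z) z) => //.
    * by rewrite Nyn PX.
    * by rewrite opprK.
    * by rewrite dvdzE abszN absz_nat; exact: cop_ndvd pp czy pd.
Qed.
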